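(* Let $K$ be a field of characteristic $\neq 2$, $n\ge1$, and let $\mathcal C$ be an EACP over $K$ with natural basis $\{h_1,\dots,h_n,r\}$ and structural constants $a_{ij},b_i$, and suppose $\det(a_{ij})_{i,j=1}^n\neq0$. Then $\mathcal C$ is centroidal: every $K$-linear map $T:\mathcal C\to\mathcal C$ with $TL_x=L_xT$ and $TR_x=R_xT$ for all $x\in\mathcal C$ (where $L_x(y)=xy$, $R_x(y)=yx$) is a scalar multiple of the identity, so that the centroid $\Gamma(\mathcal C)$ is isomorphic to $K$.
   Context: An EACP over a field $K$ (characteristic $\neq 2$) is a $K$-algebra $\mathcal C$ with a basis $\{h_1,\dots,h_n,r\}$ (called a natural basis) whose multiplication is determined by bilinearity from $$h_ir=rh_i=\tfrac12\Big(\sum_{j=1}^n a_{ij}h_j+b_ir\Big),\qquad h_ih_j=0\ (i,j=1,\dots,n),\qquad rr=0,$$ for some constants $a_{ij},b_i\in K$. The centroid $\Gamma(\mathcal A)$ of an algebra $\mathcal A$ is the set of linear maps $T:\mathcal A\to\mathcal A$ commuting with all left and right multiplication operators; $\mathcal A$ is centroidal if $\Gamma(\mathcal A)\cong K$. *)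

(* Defs.v *)
From HB Require Import structures.
From mathcomp Require Import all_boot all_order all_algebra.
Set Implicit Arguments. Unset Strict Implicit. Unset Printing Implicit Defensive.
Import GRing.Theory.
Local Open Scope ring_scope.

(* An EACP of dimension n+1 over K, with natural basis h_1..h_n, r. *)

Section EACP.
Variables (K : fieldType) (n : nat).
Variables (a : 'M[K]_n) (b : 'rV[K]_n).

Definition hidx (i : 'I_n) : 'I_n.+1 := lift ord_max i.
Definition ridx : 'I_n.+1 := ord_max.

Definition bvec (k : 'I_n.+1) : 'rV[K]_n.+1 := delta_mx 0 k.

(* h_i r = r h_i = 1/2 (sum_j a_ij h_j + b_i r) *)
Definition hr (i : 'I_n) : 'rV[K]_n.+1 :=
  2^-1 *: (\sum_(j < n) a i j *: bvec (hidx j) + b 0 i *: bvec ridx).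

Definition eacp_bmul (k l : 'I_n.+1) : 'rV[K]_n.+1 :=
  match unlift ridx k, unlift ridx l with
  | Some i, None => hr i
  | None, Some i => hr i
  | _, _ => 0
  end.

Definition eacp_mul (x y : 'rV[K]_n.+1) : 'rV[K]_n.+1 :=
  \sum_(k < n.+1) \sum_(l < n.+1) (x 0 k * y 0 l) *: eacp_bmul k l.

End EACP.

(* Main.v *)
Require Import Defs.
From mathcomp Require Import all_boot all_order all_algebra.
Import GRing.Theory.
Local Open Scope ring_scope.

Section Aux.
Variables (K : fieldType) (n : nat) (a : 'M[K]_n) (b : 'rV[K]_n).
Local Notation ridx := (@ridx n).

Lemma bvecE (k k' : 'I_n.+1) : bvec K k 0 k' = (k' == k)%:R.
Proof. by rewrite /bvec mxE eqxx. Qed.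

Lemma bvec_hh (i j : 'I_n) : bvec K (hidx i) 0 (hidx j) = (j == i)%:R.
Proof. by rewrite bvecE /hidx (inj_eq (@lift_inj _ ord_max)). Qed.

Lemma bvec_hr (i : 'I_n) : bvec K (hidx i) 0 ridx = 0.
Proof. by rewrite bvecE /hidx /Defs.ridx (negbTE (neq_lift _ _)). Qed.

Lemma bvec_rh (i : 'I_n) : bvec K ridx 0 (hidx i) = 0.
Proof. by rewrite bvecE /hidx /Defs.ridx eq_sym (negbTE (neq_lift _ _)). Qed.

Lemma bvec_rr : bvec K ridx 0 ridx = 1.
Proof. by rewrite bvecE eqxx. Qed.

Lemma sum_delta (F : 'I_n -> K) i : \sum_j (j == i)%:R * F j = F i.
Proof.
rewrite (bigD1 i) //= eqxx mul1r big1 ?addr0 // => j /negbTE ->.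
by rewrite mul0r.
Qed.

Lemma sum_deltaV (F : 'I_n -> 'rV[K]_n.+1) i : \sum_j (j == i)%:R *: F j = F i.
Proof.
rewrite (bigD1 i) //= eqxx scale1r big1 ?addr0 // => j /negbTE ->.
by rewrite scale0r.
Qed.

Lemma mul_basis k y : eacp_mul a b (bvec K k) y =
  \sum_l y 0 l *: eacp_bmul a b k l.
Proof.
rewrite /eacp_mul (bigD1 k) //= [X in _ + X]big1 ?addr0.
  by apply: eq_bigr => l _; rewrite bvecE eqxx mul1r.
move=> k' nk; apply: big1 => l _.
by rewrite bvecE (negbTE nk) mul0r scale0r.
Qed.

Lemma mul_r y : eacp_mul a b (bvec K ridx) y = \sum_i y 0 (hidx i) *: hr a b i.
Proof.
rewrite mul_basis (bigD1_ord ridx) //=.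
rewrite {1}/eacp_bmul unlift_none scaler0 add0r.
by apply: eq_bigr => i _; rewrite /eacp_bmul /hidx unlift_none liftK.
Qed.

Lemma mul_h (i : 'I_n) y : eacp_mul a b (bvec K (hidx i)) y = y 0 ridx *: hr a b i.
Proof.
rewrite mul_basis (bigD1_ord ridx) //=.
rewrite {1}/eacp_bmul /hidx unlift_none liftK big1 ?addr0 //.
by move=> j _; rewrite /eacp_bmul /Defs.ridx !liftK scaler0.
Qed.

Lemma hrE_h (j k : 'I_n) : hr a b j 0 (hidx k) = 2^-1 * a j k.
Proof.
rewrite /hr mxE mxE summxE; congr (_ * _).
rewrite mxE bvec_rh mulr0 addr0.
under eq_bigr do rewrite mxE bvec_hh.
rewrite (bigD1 k) //= eqxx mulr1 big1 ?addr0 // => l /negbTE nl.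
by rewrite eq_sym nl mulr0.
Qed.

Lemma sum_hrE (c : 'I_n -> K) k :
  (\sum_j c j *: hr a b j) 0 (hidx k) = 2^-1 * \sum_j c j * a j k.
Proof.
rewrite summxE mulr_sumr; apply: eq_bigr => j _.
by rewrite mxE hrE_h mulrCA.
Qed.

Lemma inj_a (w : 'I_n -> K) : \det a != 0 ->
  (forall k, \sum_j w j * a j k = 0) -> forall j, w j = 0.
Proof.
move=> da H j.
have au : a \in unitmx by rewrite unitmxE unitfE.
have : (\row_j w j) *m a = 0.
  by apply/rowP => k; rewrite mxE [RHS]mxE -[RHS](H k); apply: eq_bigr => l _; rewrite mxE.
move=> /(congr1 (mulmx^~ (invmx a))); rewrite mulmxK // mul0mx.
by move/rowP/(_ j); rewrite !mxE.
Qed.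

End Aux.

Theorem mainTheorem12 (K : fieldType) (n : nat) (a : 'M[K]_n) (b : 'rV[K]_n) :
  (2%:R : K) != 0 -> (0 < n)%N -> \det a != 0 ->
  forall T : {linear 'rV[K]_n.+1 -> 'rV[K]_n.+1},
    (forall x y, T (eacp_mul a b x y) = eacp_mul a b x (T y)) ->
    (forall x y, T (eacp_mul a b y x) = eacp_mul a b (T y) x) ->
    exists c : K, forall v, T v = c *: v.
Proof.
move=> h2 n0 da T HL _.
have i2 : (2%:R : K)^-1 != 0 by rewrite invr_eq0.
set r := bvec K (@ridx n).
pose h (i : 'I_n) := bvec K (hidx i).
pose s : K := T r 0 (@ridx n).
have coord : forall c : 'I_n -> K, \sum_j c j *: hr a b j = 0 -> forall j, c j = 0.
  move=> c Hc j; apply: (@inj_a K n a c da) => k.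
  have := congr1 (fun v : 'rV_n.+1 => v 0 (hidx k)) Hc.
  rewrite /= sum_hrE mxE => /eqP; rewrite mulf_eq0 (negbTE i2) /= => /eqP //.
have Dr : forall j, T r 0 (hidx j) = 0.
  apply: coord; rewrite -mul_r -HL mul_r big1 ?linear0 // => i _.
  by rewrite bvec_rh scale0r.
have Ch : forall j, T (h j) 0 (@ridx n) = 0.
  move=> j; have i0 : 'I_n := Ordinal n0.
  have : T (h j) 0 (@ridx n) *: hr a b i0 = 0.
    by rewrite -mul_h -HL mul_h bvec_hr scale0r linear0.
  rewrite -(@sum_deltaV K n (fun l => T (h j) 0 (@ridx n) *: hr a b l) i0).
  under eq_bigr do rewrite scalerA.
  by move/coord/(_ i0); rewrite eqxx mul1r.
have Hh : forall i j, T (h i) 0 (hidx j) = s * (j == i)%:R.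
  move=> i.
  have e1 : T (hr a b i) = s *: hr a b i.
    by rewrite -{1}[hr a b i]scale1r -(@bvec_rr K n) -mul_h HL mul_h.
  have e2 : \sum_j T (h i) 0 (hidx j) *: hr a b j = s *: hr a b i.
    rewrite -mul_r -HL mul_r -e1; congr (T _).
    under eq_bigr do rewrite bvec_hh.
    by rewrite sum_deltaV.
  have : \sum_j (T (h i) 0 (hidx j) - s * (j == i)%:R) *: hr a b j = 0.
    under eq_bigr do rewrite scalerBl -scalerA.
    by rewrite sumrB -scaler_sumr sum_deltaV e2 subrr.
  move/coord => Hj j; apply/eqP; rewrite -subr_eq0; apply/eqP; exact: Hj.
exists s => v.
have Tb : forall k, T (bvec K k) = s *: bvec K k.
  move=> k; apply/rowP => k'; rewrite mxE.
  case: (unliftP (@ridx n) k) => [i ->|->]; case: (unliftP (@ridx n) k') => [j ->|->].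
  - change (T (h i) 0 (hidx j) = s * bvec K (hidx i) 0 (hidx j)).
    by rewrite Hh bvec_hh.
  - change (T (h i) 0 (ridx n) = s * bvec K (hidx i) 0 (ridx n)).
    by rewrite Ch bvec_hr mulr0.
  - change (T r 0 (hidx j) = s * bvec K (ridx n) 0 (hidx j)).
    by rewrite Dr bvec_rh mulr0.
  - by rewrite bvec_rr mulr1.
have Ev : v = \sum_k v 0 k *: bvec K k.
  by rewrite {1}(matrix_sum_delta v) big_ord1.
transitivity (T (\sum_k v 0 k *: bvec K k)); first exact: (congr1 T Ev).
transitivity (s *: (\sum_k v 0 k *: bvec K k)); last exact: (congr1 (fun w => s *: w) (esym Ev)).
rewrite linear_sum scaler_sumr; apply: eq_bigr => k _.
by rewrite linearZ /= Tb !scalerA mulrC.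
Qed.
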